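(* Let $G=G_1\,\square\,\cdots\,\square\, G_d$, where each $G_j$ is a connected $k_j$-regular graph and $k=k_1+\cdots+k_d$ is odd. If the set of Laplacian eigenvalues of $G_j$ consists of even integers for each $j\in\{1,\ldots,d\}$, then for every vertex $u$ of $G$, $\uparrow^{2}G$ has Laplacian perfect state transfer between $(0,u)$ and $(1,u)$ at time $\frac{\pi}{2}$.
   Context: All graphs are simple, undirected, unweighted and connected. The Cartesian product $G\,\square\, H$ of graphs on $m$ and $n$ vertices is the graph with Laplacian matrix $L(G)\otimes I_n+I_m\otimes L(H)$, where $L=D-A$ is the Laplacian. The blow-up $\uparrow^{2}G$ has vertex set $\mathbb{Z}_2\times V(G)$, with $(l,u)\sim(m,v)$ iff $u\sim v$ in $G$. For a graph $X$ with Laplacian $L$, $U(t)=\exp(itL)$, and $X$ has Laplacian perfect state transfer between vertices $a,b$ at time $\tau$ if $U(\tau)\mathbf{e}_a=\gamma\mathbf{e}_b$ for some $\gamma\in\mathbb{C}$. *)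

(* Defs.v *)
From HB Require Import structures.
From mathcomp Require Import all_boot all_order all_algebra.
From mathcomp Require Import all_classical all_reals all_analysis.
From mathcomp Require Import complex.
Set Implicit Arguments. Unset Strict Implicit. Unset Printing Implicit Defensive.
Import Order.TTheory GRing.Theory Num.Theory.
Import numFieldNormedType.Exports.
Local Open Scope ring_scope.

Record graph := Graph { gV : finType; gadj : rel gV }.

Definition simple_graph (G : graph) : Prop :=
  symmetric (@gadj G) /\ irreflexive (@gadj G).

Definition connected_graph (G : graph) : Prop :=
  forall x y : gV G, connect (@gadj G) x y.

Definition degree (G : graph) (v : gV G) : nat := #|[pred w | gadj v w]|.

Definition regular_graph (G : graph) (k : nat) : Prop :=
  forall v : gV G, degree v = k.

Definition cart_prod (d : nat) (Gs : 'I_d -> graph) : graph :=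
  @Graph {dffun forall j : 'I_d, gV (Gs j)}
    (fun x y => [exists j : 'I_d, gadj (x j) (y j) &&
                   [forall i : 'I_d, (i != j) ==> (x i == y i :> gV (Gs i))]]).

Definition blowup2 (G : graph) : graph :=
  @Graph ('I_2 * gV G)%type (fun p q => gadj p.2 q.2).

Definition laplacian (F : fieldType) (G : graph) : 'M[F]_#|gV G| :=
  \matrix_(i, j) ((if i == j then (degree (enum_val i))%:R else 0)
                  - (gadj (enum_val i) (enum_val j))%:R).

Section Quantum.
Variable R : realType.
Local Notation C := R[i].
Local Open Scope complex_scope.
Local Open Scope classical_set_scope.

Definition expitL_partial (n : nat) (L : 'M[C]_n) (t : R) (N : nat) : 'M[C]_n :=
  \sum_(m < N) ((t%:C * 'i) ^+ m / (m`!)%:R) *: L ^+ m.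

Definition mx_cvg_to (n : nat) (S : nat -> 'M[C]_n) (M : 'M[C]_n) : Prop :=
  forall i j : 'I_n,
    ((fun N => @complex.Re R (S N i j)) @ \oo --> @complex.Re R (M i j)) /\
    ((fun N => @complex.Im R (S N i j)) @ \oo --> @complex.Im R (M i j)).

Definition is_expitL (n : nat) (L : 'M[C]_n) (t : R) (U : 'M[C]_n) : Prop :=
  mx_cvg_to (expitL_partial L t) U.

Definition lap_PST (X : graph) (a b : gV X) (tau : R) : Prop :=
  exists U : 'M[C]_#|gV X|,
    is_expitL (laplacian C X) tau U /\
    exists gamma : C, forall c : 'I_#|gV X|,
      U c (enum_rank a) = gamma * (c == enum_rank b)%:R.

End Quantum.

(* Main.v *)
Require Import Defs.
From HB Require Import structures.
From mathcomp Require Import all_boot all_order all_algebra.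
From mathcomp Require Import all_classical all_reals all_analysis.
From mathcomp Require Import complex.
From mathcomp Require Import ring.
Import Order.TTheory GRing.Theory Num.Theory.
Import numFieldNormedType.Exports.
Local Open Scope ring_scope.

Module Aux.
Local Open Scope complex_scope.
Local Open Scope classical_set_scope.
Section Scalar.
Variable R : realType.

Lemma addC (a b c d : R) : (a +i* b) + (c +i* d) = (a + c) +i* (b + d).
Proof. by []. Qed.

Lemma mulCR (a b r : R) : (a +i* b) * r%:C = (a * r) +i* (b * r).
Proof. by apply/eqP; rewrite eq_complex /= !mulr0 subr0 add0r !eqxx. Qed.

Lemma sumC (I : Type) (s : seq I) (P : pred I) (F G : I -> R) :
  \sum_(i <- s | P i) (F i +i* G i) =
  (\sum_(i <- s | P i) F i) +i* (\sum_(i <- s | P i) G i).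
Proof.
elim/big_rec3: _ => //= i y1 y2 y3 _ ->. by rewrite addC.
Qed.

Lemma ipow (m : nat) : ('i : R[i]) ^+ m =
  ((~~ odd m)%:R * (-1) ^+ m./2) +i* ((odd m)%:R * (-1) ^+ m.-1./2).
Proof.
rewrite -(odd_double_half m); case: (odd m) => /=; set k := m./2;
  rewrite ?add0n ?add1n ?doubleK ?uphalf_double ?half_double /= ?odd_double /=.
- rewrite exprS -muln2 mulnC exprM sqr_i.
  apply/eqP; rewrite eq_complex /=.
  have -> : (-1 : R[i]) ^+ k = ((-1) ^+ k)%:C by rewrite rmorphXn /= rmorphN1.
  by rewrite /= !mul0r !mul1r ?mulr0 ?subr0 ?add0r !eqxx.
- rewrite -muln2 mulnC exprM sqr_i.
  apply/eqP; rewrite eq_complex /=.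
  have -> : (-1 : R[i]) ^+ k = ((-1) ^+ k)%:C by rewrite rmorphXn /= rmorphN1.
  by rewrite /= mul1r mul0r !eqxx.
Qed.

Lemma expi_term (th : R) (m : nat) :
  (th%:C * 'i) ^+ m / (m`!)%:R = (cos_coeff th m) +i* (sin_coeff th m).
Proof.
rewrite exprMn ipow -rmorphXn /= -[X in _ / X](rmorph_nat (real_complex R)) /=.
rewrite -fmorphV /= mulrC mulrA -rmorphM /= mulrC mulCR /cos_coeff /sin_coeff /=.
apply/eqP; rewrite eq_complex /=; apply/andP; split; apply/eqP.
  by rewrite [_^-1 * _]mulrC !mulrA.
by rewrite [_^-1 * _]mulrC !mulrA.
Qed.


Definition esum (th : R) (N : nat) : R[i] :=
  \sum_(m < N) (th%:C * 'i) ^+ m / (m`!)%:R.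

Lemma esumE th N : esum th N = series (cos_coeff th) N +i* series (sin_coeff th) N.
Proof.
rewrite /esum /series /= !big_mkord -sumC; apply: eq_bigr => m _.
exact: expi_term.
Qed.

Lemma esum_cvg th :
  ((fun N => complex.Re (esum th N)) @ \oo --> cos th) /\
  ((fun N => complex.Im (esum th N)) @ \oo --> sin th).
Proof.
split.
  rewrite (_ : (fun N => _) = series (cos_coeff th)); last first.
    by apply/funext => N; rewrite esumE.
  by rewrite unlock; exact: is_cvg_series_cos_coeff.
rewrite (_ : (fun N => _) = series (sin_coeff th)); last first.
  by apply/funext => N; rewrite esumE.
by rewrite unlock; exact: is_cvg_series_sin_coeff.
Qed.

Lemma ReD (x y : R[i]) : complex.Re (x + y) = complex.Re x + complex.Re y.
Proof. by case: x; case: y. Qed.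
Lemma ImD (x y : R[i]) : complex.Im (x + y) = complex.Im x + complex.Im y.
Proof. by case: x; case: y. Qed.
Lemma ReM (x y : R[i]) : complex.Re (x * y) =
  complex.Re x * complex.Re y - complex.Im x * complex.Im y.
Proof. by case: x; case: y. Qed.
Lemma ImM (x y : R[i]) : complex.Im (x * y) =
  complex.Re x * complex.Im y + complex.Im x * complex.Re y.
Proof. by case: x; case: y. Qed.
Lemma Re_sum (I : Type) (r : seq I) (F : I -> R[i]) :
  complex.Re (\sum_(i <- r) F i) = \sum_(i <- r) complex.Re (F i).
Proof. exact: (big_morph _ ReD). Qed.
Lemma Im_sum (I : Type) (r : seq I) (F : I -> R[i]) :
  complex.Im (\sum_(i <- r) F i) = \sum_(i <- r) complex.Im (F i).
Proof. exact: (big_morph _ ImD). Qed.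

Lemma cvg_big (I : Type) (r : seq I) (f : I -> nat -> R) (l : I -> R) :
  (forall i, (f i @ \oo --> l i)) ->
  ((fun N => \sum_(i <- r) f i N) @ \oo --> \sum_(i <- r) l i).
Proof.
move=> H; elim: r => [|a r IH].
  rewrite big_nil; under eq_fun do rewrite big_nil; exact: cvg_cst.
rewrite big_cons; under eq_fun do rewrite big_cons.
exact: cvgD.
Qed.

Lemma pow_eig n (L : 'M[R[i]]_n) (v : 'cV[R[i]]_n) (a : R[i]) m :
  L *m v = a *: v -> L ^+ m *m v = a ^+ m *: v.
Proof.
move=> H; elim: m => [|m IH]; first by rewrite expr0 scale1r mul1mx.
by rewrite exprS -[L * _]/(L *m _) -mulmxA IH -scalemxAr H scalerA exprSr.
Qed.

Lemma col_cvg n (L : 'M[R[i]]_n) (t : R) (x : 'I_n) (I : finType)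
    (nu : I -> R) (v : I -> 'cV[R[i]]_n) :
  (forall p, L *m v p = (nu p)%:C *: v p) ->
  delta_mx x 0 = \sum_p v p ->
  forall i,
   ((fun N => complex.Re (expitL_partial L t N i x)) @ \oo -->
      complex.Re (\sum_p (cos (t * nu p) +i* sin (t * nu p)) * v p i 0)) /\
   ((fun N => complex.Im (expitL_partial L t N i x)) @ \oo -->
      complex.Im (\sum_p (cos (t * nu p) +i* sin (t * nu p)) * v p i 0)).
Proof.
move=> Hv Hx i.
have E : forall N, expitL_partial L t N i x =
    \sum_p esum (t * nu p) N * v p i 0.
  move=> N.
  have -> : expitL_partial L t N i x = (expitL_partial L t N *m delta_mx x (0 : 'I_1)) i 0.
    by rewrite -colE mxE.
  rewrite Hx mulmx_sumr summxE; apply: eq_bigr => p _.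
  rewrite /expitL_partial mulmx_suml.
  have -> : \sum_(m < N) ((t%:C * 'i) ^+ m / (m`!)%:R *: L ^+ m) *m v p =
            esum (t * nu p) N *: v p.
    rewrite /esum scaler_suml; apply: eq_bigr => m _.
    rewrite -scalemxAl (pow_eig _ _ _ _ m (Hv p)) scalerA; congr (_ *: _).
    by rewrite mulrAC -exprMn rmorphM /= mulrAC.
  by rewrite mxE.
split.
- under eq_fun do rewrite E Re_sum.
  rewrite Re_sum; apply: cvg_big => p.
  under eq_fun do rewrite ReM.
  rewrite ReM /=.
  have [c1 c2] := esum_cvg (t * nu p).
  apply: cvgB; apply: cvgM => //; exact: cvg_cst.
- under eq_fun do rewrite E Im_sum.
  rewrite Im_sum; apply: cvg_big => p.
  under eq_fun do rewrite ImM.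
  rewrite ImM /=.
  have [c1 c2] := esum_cvg (t * nu p).
  apply: cvgD; apply: cvgM => //; exact: cvg_cst.
Qed.

Lemma cos_even (M : int) :
  cos (pi / 2 * (2 * (2 * M)%:~R)) = 1 :> R /\ sin (pi / 2 * (2 * (2 * M)%:~R)) = 0 :> R.
Proof.
have E : pi / 2 * (2 * (2 * M)%:~R) = (pi *+ 2) * M%:~R :> R.
  by rewrite intrM /= !mulrA divfK ?pnatr_eq0 // -[(2%:~R : R)]/(2%:R : R) mulr_natr.
rewrite E; clear E.
case: M => n.
  rewrite -[((Posz n)%:~R : R)]/(n%:R : R) mulr_natr -[X in cos X](add0r) -[X in sin X](add0r).
  by rewrite (periodicn (@cosD2pi R)) (periodicn (@sinD2pi R)) cos0 sin0.
rewrite NegzE rmorphN mulrN cosN sinN /= -[((n.+1)%:Z)%:~R]/((n.+1)%:R : R) mulr_natr.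
rewrite -[X in cos X](add0r) -[X in sin X](add0r).
by rewrite (periodicn (@cosD2pi R)) (periodicn (@sinD2pi R)) cos0 sin0 oppr0.
Qed.

Lemma cos_odd (K : nat) : odd K ->
  cos (pi / 2 * (2 * K%:R)) = -1 :> R /\ sin (pi / 2 * (2 * K%:R)) = 0 :> R.
Proof.
move=> oK.
have E : pi / 2 * (2 * K%:R) = pi *+ K :> R.
  by rewrite mulrA divfK ?pnatr_eq0 // mulr_natr.
rewrite E -[X in cos X](add0r) -[X in sin X](add0r).
rewrite (alternatingn (@cosDpi R)) (alternatingn (@sinDpi R)) cos0 sin0 mulr0.
by rewrite -signr_odd oK expr1 mulr1.
Qed.
End Scalar.

Section GraphOps.
Set Implicit Arguments. Unset Strict Implicit.
Variable R : realType.
Local Notation C := (R[i]).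

Definition vecf (X : graph) (f : gV X -> C) : 'cV[C]_#|gV X| :=
  \col_i f (enum_val i).

Definition lapf (X : graph) (f : gV X -> C) : gV X -> C :=
  fun x => (degree x)%:R * f x - \sum_(y | gadj x y) f y.

Lemma sum_enum (X : graph) (F : gV X -> C) :
  \sum_(k < #|gV X|) F (enum_val k) = \sum_y F y.
Proof.
rewrite (reindex (@enum_rank (gV X))) /=; last first.
  by exists enum_val => y _; [rewrite enum_rankK | rewrite enum_valK].
by apply: eq_bigr => y _; rewrite enum_rankK.
Qed.

Lemma vecfE (X : graph) (f : gV X -> C) (x : gV X) :
  vecf f (enum_rank x) 0 = f x.
Proof. by rewrite mxE enum_rankK. Qed.

Lemma vecfE' (X : graph) (f : gV X -> C) k j :
  vecf f k j = f (enum_val k).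
Proof. by rewrite mxE. Qed.

Lemma lap_vec (X : graph) (f : gV X -> C) :
  laplacian C X *m vecf f = vecf (lapf f).
Proof.
apply/matrixP => i j; rewrite !mxE.
under eq_bigr do rewrite !mxE mulrBl.
rewrite sumrB (bigD1 i) //= eqxx big1 ?addr0; last first.
  by move=> k /negbTE; rewrite eq_sym => ->; rewrite mul0r.
congr (_ - _).
rewrite (sum_enum (fun y => (gadj (enum_val i) y)%:R * f y)) [RHS]big_mkcond.
by apply: eq_bigr => y _; case: gadj; rewrite ?mul1r ?mul0r.
Qed.

Lemma delta_vec (X : graph) (x : gV X) :
  delta_mx (enum_rank x) (0 : 'I_1) = vecf (fun y => (y == x)%:R).
Proof.
apply/matrixP => i j; rewrite !mxE (ord1 j) eqxx andbT.
by rewrite -(inj_eq enum_val_inj) enum_rankK.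
Qed.

Lemma vec_sum (X : graph) (I : finType) (F : I -> gV X -> C) :
  vecf (fun y => \sum_p F p y) = \sum_p vecf (F p).
Proof. by apply/matrixP => i j; rewrite summxE !mxE; apply: eq_bigr => p _; rewrite mxE. Qed.

Lemma vec_eig (X : graph) (f : gV X -> C) (c : C) :
  (forall z, lapf f z = c * f z) -> laplacian C X *m vecf f = c *: vecf f.
Proof.
move=> H; rewrite lap_vec; apply/matrixP => i j; rewrite !mxE.
by rewrite H.
Qed.

Lemma deg_sum (X : graph) (v : gV X) :
  (degree v)%:R = \sum_(y | gadj v y) (1 : C).
Proof. by rewrite /degree -sum1_card natr_sum. Qed.


Lemma lap_entry (X : graph) (f : gV X -> C) (z : gV X) :
  lapf f z = (laplacian C X *m vecf f) (enum_rank z) 0.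
Proof. by rewrite lap_vec vecfE. Qed.

Lemma factor_decomp (G : graph) (x : gV G) :
  simple_graph G ->
  (forall lam, eigenvalue (laplacian C G) lam -> exists m : int, lam = (2 * m)%:~R) ->
  exists (mm : 'I_#|gV G| -> int) (w : 'I_#|gV G| -> gV G -> C),
    (forall r z, lapf (w r) z = (2 * mm r)%:~R * w r z) /\
    (forall z, \sum_r w r z = (z == x)%:R).
Proof.
move=> [Gsym Girr] Heig.
set A := laplacian C G.
have Asym : A \is symmetricmx.
  apply/is_hermitianmxP; rewrite expr0 scale1r; apply/matrixP => i j.
  rewrite !mxE /= eq_sym Gsym; case: eqP => [->|] //.
have Areal : A \is a mxOver Num.real.
  apply/mxOverP => i j; rewrite mxE; apply: rpredB; last exact: realn.
  by case: eqP => _; [exact: realn | exact: real0].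
have NA := symmetric_normalmx Asym Areal.
set P := spectralmx A; set D := spectral_diag A.
have HA : A = invmx P *m diag_mx D *m P by exact/(orthomx_spectralP (A:=A)).
have Pu : P \in unitmx := spectral_unit A.
set Q := invmx P.
have AQ : A *m Q = Q *m diag_mx D.
  by rewrite {1}HA -!mulmxA mulmxV // mulmx1.
have PA : P *m A = diag_mx D *m P.
  by rewrite {1}HA !mulmxA mulmxV // mul1mx.
have Hm : forall r, exists m : int, D 0 r = (2 * m)%:~R.
  move=> r; apply: Heig; apply/eigenvalueP; exists (row r P).
    rewrite -row_mul PA mul_diag_mx; apply/matrixP => i j.
    by rewrite !mxE.
  apply/negP => /eqP H0.
  have : row r (P *m Q) = 0 by rewrite row_mul H0 mul0mx.
  rewrite mulmxV // => /matrixP/(_ 0 r); rewrite !mxE eqxx /= => /eqP.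
  by rewrite oner_eq0.
have [mm Hmm] := choice Hm.
exists mm, (fun r z => P r (enum_rank x) * Q (enum_rank z) r); split.
  move=> r z; rewrite lap_entry [LHS]mxE -Hmm.
  under eq_bigr do rewrite vecfE' enum_valK mulrCA.  rewrite -mulr_sumr.
  have -> : \sum_j A (enum_rank z) j * Q j r = (A *m Q) (enum_rank z) r.
    by rewrite mxE.
  by rewrite AQ mul_mx_diag mxE mulrA mulrC.
move=> z.
have -> : \sum_r P r (enum_rank x) * Q (enum_rank z) r = (Q *m P) (enum_rank z) (enum_rank x).
  by rewrite mxE; apply: eq_bigr => r _; rewrite mulrC.
by rewrite mulVmx // mxE (inj_eq enum_rank_inj).
Qed.


Lemma factor_pad (G : graph) (x : gV G) (K : nat) :
  simple_graph G ->
  (forall lam, eigenvalue (laplacian C G) lam -> exists m : int, lam = (2 * m)%:~R) ->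
  (#|gV G| <= K)%N ->
  exists (mm : 'I_K -> int) (w : 'I_K -> gV G -> C),
    (forall r z, lapf (w r) z = (2 * mm r)%:~R * w r z) /\
    (forall z, \sum_r w r z = (z == x)%:R).
Proof.
move=> Gs Heig HK.
have [mm0 [w0 [H1 H2]]] := factor_decomp x Gs Heig.
pose n := #|gV G|.
exists (fun r : 'I_K => oapp mm0 0 (insub (val r) : option 'I_n)).
exists (fun (r : 'I_K) z => oapp (fun r' => w0 r' z) 0 (insub (val r) : option 'I_n)).
split.
  move=> r z; case: insubP => [r' _ _|_] /=; first exact: H1.
  by rewrite /lapf big1 // mulr0 subr0 mulr0.
move=> z; rewrite -H2.
pose F (k : nat) := oapp (fun r' => w0 r' z) 0 (insub k : option 'I_n).
have -> : \sum_(r < n) w0 r z = \sum_(r < n) F r.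
  by apply: eq_bigr => r _; rewrite /F valK.
rewrite (big_ord_widen K F HK) [RHS]big_mkcond /=; apply: eq_bigr => r _.
by case: ifP => // /negbT Hr; rewrite /F insubN.
Qed.


Section Product.
Variables (d : nat) (Gs : 'I_d -> graph).
Local Notation V := {dffun forall j : 'I_d, gV (Gs j)}.
Local Notation GP := (cart_prod Gs).
Hypothesis Hirr : forall j, irreflexive (@gadj (Gs j)).

Definition upd (x : V) (j : 'I_d) (z : gV (Gs j)) : V :=
  [ffun i => @dfwith _ (fun i => gV (Gs i)) (fun i => x i) j z i].

Arguments upd x j z : clear implicits.

Lemma upd_in (x : V) j z : upd x j z j = z.
Proof. rewrite /upd ffunE. exact: dfwith_in. Qed.

Lemma upd_out (x : V) j z i : i != j -> upd x j z i = x i.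
Proof. by move=> H; rewrite /upd ffunE; apply: dfwith_out; rewrite eq_sym. Qed.

Lemma nbr_sum (h : V -> C) (x : V) :
  \sum_(y | @gadj GP x y) h y = \sum_j \sum_(z | gadj (x j) z) h (upd x j z).
Proof.
pose P j (y : V) := gadj (x j) (y j) && [forall i, (i != j) ==> (x i == y i)].
have step1 : \sum_(y | @gadj GP x y) h y = \sum_y \sum_(j | P j y) h y.
  rewrite big_mkcond; apply: eq_bigr => y _ /=.
  case: existsP => [[j0 Hj0]|Hn].
    rewrite (bigD1 j0) //= big1 ?addr0 // => j /andP [Pj nej].
    exfalso; move: Hj0 => /andP [_ /forallP /(_ j)]; rewrite nej /= => /eqP E.
    by move: Pj => /andP [] ; rewrite -E Hirr.
  by rewrite big1 // => j Pj; exfalso; apply: Hn; exists j.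
rewrite step1.
under eq_bigr do rewrite big_mkcond.
rewrite exchange_big; apply: eq_bigr => j _; rewrite -big_mkcond /=.
rewrite (reindex_onto (upd x j) (fun y => y j)) /=; last first.
  move=> y /andP [_ /forallP Hy]; apply/ffunP => i; rewrite ffunE.
  case: dfwithP => // i' ne; by move: (Hy i'); rewrite eq_sym ne /= => /eqP.
apply: eq_bigl => z; rewrite /P upd_in eqxx andbT.
case: (gadj _ _) => //=; apply/forallP => i; apply/implyP => ne.
by rewrite upd_out.
Qed.

Lemma deg_prod (x : V) : (@degree GP x)%:R = \sum_j (degree (x j))%:R :> C.
Proof.
rewrite (deg_sum (X := GP)) nbr_sum; apply: eq_bigr => j _; by rewrite deg_sum.
Qed.

Lemma prod_eig (w : forall j, gV (Gs j) -> C) (lam : 'I_d -> C) :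
  (forall j z, lapf (w j) z = lam j * w j z) ->
  forall y : V, @lapf GP (fun y : V => \prod_j w j (y j)) y =
                (\sum_j lam j) * \prod_j w j (y j).
Proof.
move=> Hw y.
rewrite /lapf nbr_sum deg_prod /=.
have E : forall j, \sum_(z | gadj (y j) z) \prod_i w i (upd y j z i) =
   ((degree (y j))%:R - lam j) * \prod_i w i (y i).
  move=> j.
  have Hs : \sum_(z | gadj (y j) z) w j z = ((degree (y j))%:R - lam j) * w j (y j).
    by have := Hw j (y j); rewrite /lapf mulrBl => /eqP; rewrite subr_eq addrC -subr_eq => /eqP <-.
  rewrite (bigD1 j) //= mulrA -Hs mulr_suml; apply: eq_bigr => z _.
  rewrite (bigD1 j) //= upd_in; congr (_ * _); apply: eq_bigr => i ne.
  by rewrite upd_out.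
rewrite (eq_bigr _ (fun j _ => E j)).
rewrite -!mulr_suml -mulrBl sumrB opprB addrC subrK.
done.
Qed.

End Product.


Lemma lapfZ (X : graph) (c : C) (f : gV X -> C) z :
  lapf (fun y => c * f y) z = c * lapf f z.
Proof. by rewrite /lapf -mulr_sumr mulrBr mulrCA. Qed.

Lemma ord2P (l : 'I_2) : l = ord0 \/ l = ord_max.
Proof. by case: l => [[|[|k]] H] //; [left|right]; apply: val_inj. Qed.

Section Blowup.
Variable G : graph.
Local Notation X := (blowup2 G).

Lemma blow_nbr (h : 'I_2 * gV G -> C) (q : 'I_2 * gV G) :
  \sum_(p | @gadj X q p) h p = \sum_(z | gadj q.2 z) (h (ord0, z) + h (ord_max, z)).
Proof.
have -> : \sum_(p | @gadj X q p) h p =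
          \sum_(p | xpredT p.1 && gadj q.2 p.2) h (p.1, p.2).
  by apply: eq_big => // [[l z]].
rewrite -(pair_big_dep xpredT (fun _ z => gadj q.2 z) (fun l z => h (l, z))) /=.
rewrite big_ord_recl big_ord_recl big_ord0 addr0 -big_split.
by apply: eq_bigr => z _; congr (_ + h (_, z)); apply: val_inj.
Qed.

Lemma blow_deg (q : 'I_2 * gV G) : (@degree X q)%:R = 2 * (degree q.2)%:R :> C.
Proof.
rewrite (deg_sum (X := X)) blow_nbr deg_sum mulr_sumr.
by apply: eq_bigr => z _; rewrite mulr1.
Qed.

Lemma blow_lapf (h : 'I_2 * gV G -> C) (q : 'I_2 * gV G) :
  @lapf X h q = 2 * (degree q.2)%:R * h q -
                \sum_(z | gadj q.2 z) (h (ord0, z) + h (ord_max, z)).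
Proof. by rewrite /lapf blow_deg blow_nbr. Qed.

Lemma blow_lift (g : gV G -> C) (q : 'I_2 * gV G) :
  @lapf X (fun p => g p.2) q = 2 * lapf g q.2.
Proof.
rewrite blow_lapf /lapf /=.
have -> : \sum_(z | gadj q.2 z) (g z + g z) = 2 * \sum_(z | gadj q.2 z) g z.
  by rewrite mulr_sumr; apply: eq_bigr => z _; rewrite mulr_natl mulr2n.
by rewrite mulrBr mulrA.
Qed.

Definition sgn (l : 'I_2) : C := if l == ord0 then 1 else -1.
Definition sfun (w : gV G) (p : 'I_2 * gV G) : C := (p.2 == w)%:R * sgn p.1.

Lemma blow_s (c : C) (w : gV G) (q : 'I_2 * gV G) :
  @lapf X (fun p => c * sfun w p) q = 2 * (degree w)%:R * (c * sfun w q).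
Proof.
rewrite lapfZ blow_lapf /sfun /=.
rewrite big1 ?subr0; last first.
  by move=> z _; rewrite /sgn /= mulr1 mulrN1 subrr.
case: (eqVneq q.2 w) => [->|ne]; first by rewrite mulrCA.
by rewrite !mul0r !mulr0.
Qed.

End Blowup.

End GraphOps.

Section Main.
Set Implicit Arguments. Unset Strict Implicit.
Variable R : realType.
Local Notation C := (R[i]).
Local Open Scope complex_scope.
Local Open Scope classical_set_scope.

Lemma big_opt (J : finType) (F : option J -> C) :
  \sum_o F o = F None + \sum_f F (Some f).
Proof.
rewrite (bigD1 None) //=; congr (_ + _).
rewrite -(big_imset _ (in2W (@Some_inj _))) /=.
apply: eq_bigl => [[f|]] /=.
  by rewrite imset_f.
by apply/esym/imsetP => [[x _]].
Qed.

Lemma one_c : (1 +i* 0 : C) = 1. Proof. by []. Qed.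
Lemma mone_c : ((-1) +i* 0 : C) = -1.
Proof. by apply/eqP; rewrite eq_complex /= oppr0 !eqxx. Qed.
Lemma ReIm_c (z : C) : complex.Re z +i* complex.Im z = z.
Proof. by case: z. Qed.

Lemma prod_decomp d (Gs : 'I_d -> graph) (K : nat) :
  (forall j, simple_graph (Gs j)) ->
  (forall j (lam : C), eigenvalue (laplacian C (Gs j)) lam -> exists m : int, lam = (2 * m)%:~R) ->
  (forall j, #|gV (Gs j)| <= K)%N ->
  forall w : {dffun forall j, gV (Gs j)},
  exists (mu : {ffun 'I_d -> 'I_K} -> int)
         (W : {ffun 'I_d -> 'I_K} -> {dffun forall j, gV (Gs j)} -> C),
    (forall f y, @lapf R (cart_prod Gs) (W f) y = (2 * mu f)%:~R * W f y) /\
    (forall y, \sum_f W f y = (y == w)%:R).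
Proof.
move=> Hs Heig HK w.
have Hirr : forall j, irreflexive (@gadj (Gs j)) by move=> j; case: (Hs j).
have H : forall j, exists p : ('I_K -> int) * ('I_K -> gV (Gs j) -> C),
    (forall r z, lapf (p.2 r) z = (2 * p.1 r)%:~R * p.2 r z) /\
    (forall z, \sum_r p.2 r z = (z == w j)%:R).
  move=> j; have [mm [ww [H1 H2]]] := factor_pad (w j) (Hs j) (Heig j) (HK j).
  by exists (mm, ww).
pose p j := sval (cid (H j)).
have Hp : forall j, _ := fun j => svalP (cid (H j)).
exists (fun f => \sum_j (p j).1 (f j)), (fun f y => \prod_j (p j).2 (f j) (y j)).
split.
  move=> f y.
  rewrite (prod_eig Hirr (w := fun j => (p j).2 (f j))
                         (lam := fun j => (2 * (p j).1 (f j))%:~R)).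
    by rewrite mulr_sumr rmorph_sum.
  by move=> j z; exact: (Hp j).1.
move=> y.
rewrite -(bigA_distr_bigA (fun j r => (p j).2 r (y j))) /=.
rewrite (eq_bigr (fun j => ((y j == w j)%:R : C))); last by move=> j _; exact: (Hp j).2.
case: (eqVneq y w) => [->|ne].
  by rewrite big1 // => j _; rewrite eqxx.
have /existsP [j Hj] : [exists j, y j != w j].
  apply: contraR ne => /existsPn Hn; apply/eqP/ffunP => j.
  by apply/eqP; move: (Hn j); rewrite negbK.
by rewrite (bigD1 j) //= (negbTE Hj) mul0r.
Qed.

Lemma main_lemma (d : nat) (Gs : 'I_d -> graph) (k : 'I_d -> nat) :
  (forall j, simple_graph (Gs j)) ->
  (forall j, regular_graph (Gs j) (k j)) ->
  odd (\sum_(j < d) k j)%N ->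
  (forall j (lambda : R[i]), eigenvalue (laplacian R[i] (Gs j)) lambda ->
      exists m : int, lambda = (2 * m)%:~R) ->
  forall u : gV (cart_prod Gs),
    lap_PST (R := R) (X := blowup2 (cart_prod Gs)) (ord0, u) (ord_max, u) (pi / 2).
Proof.
move=> Hs Hr Hodd Heig u.
set GP := cart_prod Gs.
set X := blowup2 GP.
set L := laplacian C X.
set t : R := pi / 2.
have Hirr : forall j, irreflexive (@gadj (Gs j)) by move=> j; case: (Hs j).
pose K := \max_j #|gV (Gs j)|.
have HK : forall j, (#|gV (Gs j)| <= K)%N by move=> j; exact: leq_bigmax.
pose J := {ffun 'I_d -> 'I_K}.
have Hdeg : forall w : gV GP, degree w = (\sum_j k j)%N.
  move=> w; apply/eqP; rewrite -(eqr_nat C) (deg_prod R Hirr) natr_sum.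
  by apply/eqP; apply: eq_bigr => j _; rewrite Hr.
have colX : forall q : 'I_2 * gV GP,
  exists (nu : option J -> R) (v : option J -> 'cV[C]_#|gV X|),
    (forall o, L *m v o = (nu o)%:C *: v o) /\
    delta_mx (enum_rank (q : gV X)) 0 = \sum_o v o /\
    (q.1 = ord0 -> forall i, \sum_o (cos (t * nu o) +i* sin (t * nu o)) * v o i 0 =
                   (enum_val i == ((ord_max, q.2) : gV X))%:R).
  move=> [l0 w].
  have [mu [W [HW1 HW2]]] := prod_decomp Hs Heig HK w.
  pose F (o : option J) : gV X -> C := match o with
    | Some f => fun p => 2^-1 * W f p.2
    | None => fun p => (2^-1 * @sgn R l0) * @sfun R GP w p end.
  exists (fun o => match o with Some f => 2 * (2 * mu f)%:~R | None => 2 * (degree w)%:R end).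
  exists (fun o => vecf (F o)).
  split; [|split].
  - case => [f|]; refine (@vec_eig R X _ _ _) => p.
      rewrite /F (blow_lift (fun z : gV GP => 2^-1 * W f z)) lapfZ HW1.
      rewrite (rmorphM (real_complex R)) (rmorph_int (real_complex R)) (rmorph_nat (real_complex R)); ring.
    rewrite /F blow_s (rmorphM (real_complex R)) !(rmorph_nat (real_complex R)); ring.
  - rewrite delta_vec -vec_sum; congr vecf; apply/funext => p.
    rewrite big_opt /F -mulr_sumr HW2.
    case: p => l z; rewrite xpair_eqE /sfun /=.
    change (((l == l0) && (z == w :> gV GP))%:R = 2^-1 * sgn R l0 * ((z == w :> gV GP)%:R * sgn R l) + 2^-1 * (z == w :> gV GP)%:R :> C).
    case: (boolP (z == w :> gV GP)) => Ezw; last first.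
      by rewrite andbF /= !mul0r !mulr0 addr0.
    rewrite andbT mul1r.
    have h2 : (2^-1 : C) + 2^-1 = 1.
      by rewrite [RHS](splitr 1) mul1r.
    case: (ord2P l0) => ->; case: (ord2P l) => -> /=; rewrite /sgn /=;
      by rewrite ?mulr1 ?mul1r ?mulrN1 ?mulN1r ?opprK ?h2 ?addNr.
  - move=> /= Hl0 i.
    rewrite big_opt Hdeg.
    have [c1 s1] := cos_odd R _ Hodd.
    rewrite /t c1 s1 mone_c.
    have ce : forall f, (cos (pi / 2 * (2 * (2 * mu f)%:~R)) +i* sin (pi / 2 * (2 * (2 * mu f)%:~R)) : C) = 1.
      by move=> f; have [-> ->] := cos_even R (mu f).
    rewrite (eq_bigr _ (fun f _ => congr1 (fun c => c * _) (ce f))) /=.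
    rewrite /vecf !mxE.
    under eq_bigr do rewrite mul1r mxE.
    rewrite /= -mulr_sumr HW2 Hl0.
    case: (enum_val i) => l z; rewrite xpair_eqE /sfun /=.
    change ((-1) * (2^-1 * sgn R ord0 * ((z == w :> gV GP)%:R * sgn R l)) + 2^-1 * (z == w :> gV GP)%:R = ((l == ord_max) && (z == w :> gV GP))%:R :> C).
    case: (boolP (z == w :> gV GP)) => Ezw; last by rewrite andbF /= !mul0r !mulr0 addr0.
    rewrite andbT mul1r.
    have h2 : (2^-1 : C) + 2^-1 = 1.
      by rewrite [RHS](splitr 1) mul1r.
    by case: (ord2P l) => -> /=; rewrite /sgn /= ?mulr1 ?mul1r ?mulN1r ?mulrN1 ?opprK ?h2 ?addNr.
pose Ure (i j : 'I_#|gV X|) := lim ((fun N => complex.Re (expitL_partial L t N i j)) @ \oo).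
pose Uim (i j : 'I_#|gV X|) := lim ((fun N => complex.Im (expitL_partial L t N i j)) @ \oo).
exists (\matrix_(i, j) (Ure i j +i* Uim i j)).
split.
  move=> i j; rewrite !mxE /=.
  have [nu [v [He [Hsum _]]]] := colX (enum_val j).
  rewrite enum_valK in Hsum.
  have [c1 c2] := @col_cvg R _ _ t _ _ _ _ He Hsum i.
  by split; [exact: (cvgP _ c1) | exact: (cvgP _ c2)].
exists 1 => c; rewrite mxE mul1r.
have [nu [v [He [Hsum Hval]]]] := colX (ord0, u).
have [c1 c2] := @col_cvg R _ _ t _ _ _ _ He Hsum c.
rewrite /Ure /Uim (cvg_lim (@Rhausdorff R) c1) (cvg_lim (@Rhausdorff R) c2) ReIm_c.
rewrite (Hval erefl c).
by rewrite -(inj_eq enum_val_inj) enum_rankK.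
Qed.

End Main.
End Aux.

Theorem theorem5 (R : realType) (d : nat) (Gs : 'I_d -> graph) (k : 'I_d -> nat) :
  (forall j, simple_graph (Gs j)) ->
  (forall j, connected_graph (Gs j)) ->
  (forall j, regular_graph (Gs j) (k j)) ->
  odd (\sum_(j < d) k j)%N ->
  (forall j (lambda : R[i]), eigenvalue (laplacian R[i] (Gs j)) lambda ->
      exists m : int, lambda = (2 * m)%:~R) ->
  forall u : gV (cart_prod Gs),
    lap_PST (R := R) (X := blowup2 (cart_prod Gs)) (ord0, u) (ord_max, u) (pi / 2).
Proof.
move=> Hs _ Hr Hodd Heig u.
exact: (@Aux.main_lemma R d Gs k Hs Hr Hodd Heig u).
Qed.
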